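(* Under the assumptions of Theorem 2, for every integer $j\ge J_2^\star$, $$\mathbb P(\tau_{\text{com}}>j)\le 3(n+m)^3\exp\big(-j/(3\bar d)\big).$$
   Context: Setting: undirected graph on honest agents $[n]$ and malicious agents $n+1,\dots,n+m$; $N(i)$ neighbors of $i$, $\bar d=\max_{i\in[n]}|N(i)|$; $E_{\text{hon}}$ the edges among honest agents. In the algorithm, at the end of each phase $j$, honest $i$ samples $H_j^{(i)}$ uniformly from $N(i)\setminus P_j^{(i)}$ (independently of everything else given the past), where $P_j^{(i)}$ is its blocklist at phase $j$; the proposed blocking rule, whenever it triggers at phase $j$, adds the agent $H_{j-1}^{(i)}$ to $P_{j'}^{(i)}$ exactly for $j'\in\{j,\dots,\lceil j^\eta\rceil\}$ (blocklists otherwise empty); the rule involves $\theta_j=(j/3)^{\rho_1}$. Assumptions of Theorem 2 include $\eta>1$, $0<\rho_1\le1/\eta$ (and the other conditions $\beta>1$, $\alpha>\frac32+\frac1{2\beta}+\frac1{2\rho_1^2}$, $\frac1{2\alpha-3}<\rho_2<\rho_1(\beta-1)$, $G_{\text{hon}}$ connected). Definitions. $J_2^\star=\min\{j\in\mathbb N: 1\le\lfloor\theta_{j'}\rfloor\le j'-2\text{ and } j'/3\le(j'-2)-\lceil\lfloor\theta_{j'}\rfloor^\eta\rceil\ \forall j'\ge j\}$. For $\{i,i'\}\in E_{\text{hon}}$, $\Xi_j^{(i\to i')}=\bigcap_{j'=\lfloor\theta_j\rfloor}^{j-2}\{H_{j'}^{(i')}\ne i\}$. $\tau_{\text{com}}=\inf\{j\in\mathbb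 N:$ for all $j'\ge j$ and all ordered pairs $(i,i')$ with $\{i,i'\}\in E_{\text{hon}}$, $\Xi_{j'}^{(i\to i')}$ does not occur$\}$. *)

(* Defs.v *)
From HB Require Import structures.
From mathcomp Require Import all_boot all_order all_algebra.
From mathcomp Require Import all_classical all_reals all_analysis.
Unset Implicit Arguments. Unset Printing Implicit Defensive.
Import Order.TTheory GRing.Theory Num.Theory.
Local Open Scope classical_set_scope.
Local Open Scope ring_scope.

(* Agents are 'I_(n+m); agent i (0-based) is honest iff i < n,
   malicious iff n <= i < n+m. *)
Definition honest (n m : nat) (i : 'I_(n + m)) : bool := (i < n)%N.

Definition nbhd (N : nat) (adj : rel 'I_N) (i : 'I_N) : {set 'I_N} :=
  [set k | adj i k].

Definition dbar (n m : nat) (adj : rel 'I_(n + m)) : nat :=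
  \max_(i : 'I_(n + m) | honest n m i) #|nbhd (n + m) adj i|.

Definition hon_edge (n m : nat) (adj : rel 'I_(n + m)) : rel 'I_(n + m) :=
  fun x y => [&& honest n m x, honest n m y & adj x y].

Definition G_hon_connected (n m : nat) (adj : rel 'I_(n + m)) : Prop :=
  forall x y, honest n m x -> honest n m y -> connect (hon_edge n m adj) x y.

Definition simple_graph (N : nat) (adj : rel 'I_N) : Prop :=
  symmetric adj /\ irreflexive adj.

Definition theta {R : realType} (rho1 : R) (j : nat) : R :=
  (j%:R / 3) `^ rho1.

Definition J2cond {R : realType} (eta rho1 : R) (j' : nat) : Prop :=
  let f := Num.floor (theta rho1 j') in
  (1 <= f)%R /\ (f <= j'%:Z - 2)%R /\
  (j'%:R / 3 <= (j'%:R - 2) - (Num.ceil ((f%:~R : R) `^ eta))%:~R :> R).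

Definition is_J2star {R : realType} (eta rho1 : R) (J : nat) : Prop :=
  (forall j', (J <= j')%N -> J2cond eta rho1 j') /\
  (forall J', (forall j', (J' <= j')%N -> J2cond eta rho1 j') -> (J <= J')%N).

(* Blocklist P_j^{(i)}(w): the set of H_{l-1}^{(i)}(w) over all phases l >= 2
   at which the blocking rule of agent i triggers (event T l i) and
   such that l <= j <= ceil(l^eta). *)
Definition blocklist {R : realType} {Omega : Type} (N : nat) (eta : R)
  (H : nat -> 'I_N -> Omega -> 'I_N) (T : nat -> 'I_N -> set Omega)
  (j : nat) (i : 'I_N) (w : Omega) : {set 'I_N} :=
  [set x | `[< exists l : nat, [/\ (2 <= l)%N, (l <= j)%N,
       (j%:Z <= Num.ceil ((l%:R : R) `^ eta))%R, T l i w & H l.-1 i w = x] >] ].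

Definition Xi {R : realType} {Omega : Type} (N : nat) (rho1 : R)
  (H : nat -> 'I_N -> Omega -> 'I_N) (j : nat) (i i' : 'I_N) : set Omega :=
  [set w | forall j'' : nat, (Num.floor (theta rho1 j) <= j''%:Z)%R ->
            (j'' + 2 <= j)%N -> H j'' i' w != i].

Definition com_set {R : realType} {Omega : Type} (n m : nat) (rho1 : R)
  (adj : rel 'I_(n + m)) (H : nat -> 'I_(n + m) -> Omega -> 'I_(n + m))
  (w : Omega) : set nat :=
  [set j | forall j', (j <= j')%N -> forall i i' : 'I_(n + m),
      hon_edge n m adj i i' -> ~ Xi (n + m) rho1 H j' i i' w].

(* the event {tau_com > j}, tau_com = inf com_set (inf of empty set = +oo) *)
Definition tau_com_gt {R : realType} {Omega : Type} (n m : nat) (rho1 : R)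
  (adj : rel 'I_(n + m)) (H : nat -> 'I_(n + m) -> Omega -> 'I_(n + m))
  (j : nat) : set Omega :=
  [set w | forall k, (k <= j)%N -> ~ com_set n m rho1 adj H w k].

(* Main.v *)
Require Import Defs.
From HB Require Import structures.
From mathcomp Require Import all_boot all_order all_algebra.
From mathcomp Require Import all_classical all_reals all_analysis.
Import Order.TTheory GRing.Theory Num.Theory.
Local Open Scope classical_set_scope.
Local Open Scope ring_scope.
From mathcomp Require Import ring lra zify.
Lemma sum_ind (R : realType) (N : nat) (S : {set 'I_N}) :
  \sum_(x : 'I_N) ((x \in S)%:R : R) = #|S|%:R.
Proof.
rewrite -sum1_card natr_sum [in RHS]big_mkcond /=.
by apply: eq_bigr => x _; case: (x \in S).
Qed.

Lemma sum_frac (R : realType) (N : nat) (S : {set 'I_N}) :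
  \sum_(x : 'I_N) ((x \in S)%:R / #|S|%:R : R) = (#|S|%:R / #|S|%:R).
Proof. by rewrite -mulr_suml sum_ind. Qed.

Lemma frac_le1 (R : realType) (k : nat) : 0 <= (k%:R / k%:R : R) <= 1.
Proof.
case: k => [|k]; first by rewrite mul0r lexx ler01.
by rewrite divff ?pnatr_eq0 // lexx ler01.
Qed.

Lemma prod_bound (R : realType) N (P : pred 'I_N) (sg : 'I_N -> {set 'I_N})
  (i i' : 'I_N) (D : nat) :
  P i' -> i \in sg i' -> (#|sg i'| <= D)%N ->
  \prod_(h | P h) \sum_(x | (h != i') || (x != i))
      ((x \in sg h)%:R / #|sg h|%:R : R) <= 1 - D%:R^-1.
Proof.
move=> Pi' isg cD.
have f0 h x : 0 <= ((x \in sg h)%:R / #|sg h|%:R : R) by rewrite divr_ge0.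
have fac h (Q : pred 'I_N) : 0 <= \sum_(x | Q x) ((x \in sg h)%:R / #|sg h|%:R : R) <= 1.
  apply/andP; split; first by apply: sumr_ge0 => x _.
  apply: le_trans (_ : \sum_x ((x \in sg h)%:R / #|sg h|%:R : R) <= 1).
    rewrite [leRHS](bigID Q) /= lerDl; by apply: sumr_ge0 => x _.
  by rewrite sum_frac; case/andP: (frac_le1 R #|sg h|).
have cpos : (0 < #|sg i'|)%N by apply/card_gt0P; exists i.
rewrite (bigD1 i') //= eqxx /=.
have -> : \sum_(x | x != i) ((x \in sg i')%:R / #|sg i'|%:R : R) = 1 - #|sg i'|%:R^-1.
  have e := sum_frac R N (sg i'); rewrite (bigD1 i) //= isg [in RHS]divff ?pnatr_eq0 -?lt0n // in e.
  rewrite mul1r in e; lra.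
have h1 : 0 <= 1 - (#|sg i'|%:R : R)^-1.
  by rewrite subr_ge0 invf_le1 // ?ler1n ?ltr0n.
apply: le_trans (_ : (1 - (#|sg i'|%:R : R)^-1) * 1 <= _).
  apply: ler_wpM2l => //; apply: prodr_ile1 => h _; exact: fac.
rewrite mulr1 lerD2l lerN2 lef_pV2 ?posrE ?ltr0n ?ler_nat //.
exact: leq_trans cpos cD.
Qed.
Section SA.
Context {T : Type} {G : set (set T)}.
Hypothesis hG : sigma_algebra setT G.

Lemma sG0 : G set0. Proof. by case: hG. Qed.
Lemma sGC A : G A -> G (~` A).
Proof. by case: hG => _ h _ /h; rewrite setTD. Qed.
Lemma sGT : G setT. Proof. by rewrite -setC0; apply: sGC; exact: sG0. Qed.
Lemma sGU A B : G A -> G B -> G (A `|` B).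
Proof.
move=> hA hB; case: hG => _ _ h.
have -> : A `|` B = \bigcup_k (if k == 0%N then A else B).
  rewrite predeqE => w; split.
    by case=> ?; [exists 0%N | exists 1%N].
  by case=> k _; case: eqP => _ ?; [left|right].
by apply: h => k; case: eqP.
Qed.
Lemma sGI A B : G A -> G B -> G (A `&` B).
Proof.
move=> hA hB; rewrite -[A `&` B]setCK setCI; apply: sGC.
by apply: sGU; apply: sGC.
Qed.
Lemma sGall (I : eqType) (s : seq I) (Q : I -> Prop) (X : I -> set T) :
  (forall i, i \in s -> Q i -> G (X i)) ->
  G [set w | forall i, i \in s -> Q i -> X i w].
Proof.
elim: s => [|x s IH] h.
  have -> : [set w | forall i, i \in [::] -> Q i -> X i w] = setT.
    by rewrite predeqE => w; split => // _ i; rewrite in_nil.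
  exact: sGT.
have -> : [set w | forall i, i \in x :: s -> Q i -> X i w] =
   [set w | Q x -> X x w] `&` [set w | forall i, i \in s -> Q i -> X i w].
  rewrite predeqE => w; split.
    move=> H; split; first by apply: H; rewrite mem_head.
    by move=> i hi; apply: H; rewrite in_cons hi orbT.
  case=> H1 H2 i; rewrite in_cons => /orP [/eqP ->|hi]; first exact: H1.
  exact: H2.
apply: sGI; last by apply: IH => i hi; apply: h; rewrite in_cons hi orbT.
case: (pselect (Q x)) => q.
  have -> : [set w | Q x -> X x w] = X x.
    by rewrite predeqE => w; split => [H|H _]; [exact: H q|].
  by apply: h => //; rewrite mem_head.
have -> : [set w | Q x -> X x w] = setT.
  by rewrite predeqE => w; split => // _ /q.
exact: sGT.
Qed.
Lemma sGex (I : eqType) (s : seq I) (Q : I -> Prop) (X : I -> set T) :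
  (forall i, i \in s -> Q i -> G (X i)) ->
  G [set w | exists i, [/\ i \in s, Q i & X i w]].
Proof.
move=> h.
have -> : [set w | exists i, [/\ i \in s, Q i & X i w]] =
  ~` [set w | forall i, i \in s -> Q i -> (~` X i) w].
  rewrite predeqE => w; split.
    by case=> i [hi q x] H; exact: (H i hi q x).
  move=> H; apply: contrapT => H'; apply: H => i hi q x; apply: H'; by exists i.
by apply: sGC; apply: sGall => i hi q; apply: sGC; apply: h.
Qed.
End SA.
Lemma setU_big_mem (T : Type) (I : eqType) (s : seq I) (P : pred I) (X : I -> set T) w :
  (\big[setU/set0]_(x <- s | P x) X x) w <-> exists x, [/\ x \in s, P x & X x w].
Proof.
elim: s => [|y s IH]; first by rewrite big_nil; split => // -[x []]; rewrite in_nil.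
rewrite big_cons; case: ifP => Py.
  split.
    case=> [h|/IH [x [xs Px Xx]]]; first by exists y; rewrite mem_head.
    by exists x; rewrite in_cons xs orbT.
  case=> x [+ Px Xx]; rewrite in_cons => /orP [/eqP exy|xs]; first by left; rewrite -exy.
  by right; apply/IH; exists x.
rewrite IH; split; case=> x [xs Px Xx].
  by exists x; rewrite in_cons xs orbT.
move: xs; rewrite in_cons => /orP [/eqP exy|xs]; first by rewrite -exy Px in Py.
by exists x.
Qed.

Lemma mu_bigU d (T : measurableType d) (R : realType) (mu : {measure set T -> \bar R})
  (I : eqType) (s : seq I) (X : I -> set T) :
  uniq s -> (forall x, x \in s -> measurable (X x)) ->
  (forall x y, x \in s -> y \in s -> x != y -> X x `&` X y = set0) ->
  mu (\big[setU/set0]_(x <- s) X x) = (\sum_(x <- s) mu (X x))%E.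
Proof.
elim: s => [|y s IH]; first by rewrite !big_nil measure0.
rewrite cons_uniq => /andP [ys us] mX dX.
have mX' x : x \in s -> measurable (X x) by move=> xs; apply: mX; rewrite in_cons xs orbT.
rewrite !big_cons measureU //.
- congr (_ + _); apply: IH => // x z xs zs; apply: dX; by rewrite in_cons ?xs ?zs orbT.
- by apply: mX; rewrite mem_head.
- by rewrite big_seq; apply: bigsetU_measurable => x; apply: mX'.
- rewrite predeqE => w; split => // -[Xy] /setU_big_mem [x [xs _ Xx]].
  have : y != x by apply: contraNneq ys => ->.
  move/(dX y x (mem_head _ _)); rewrite in_cons xs orbT => /(_ isT) e.
  by have : (X y `&` X x) w by []; rewrite e.
Qed.

Lemma mu_bigU_le d (T : measurableType d) (R : realType) (mu : {measure set T -> \bar R})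
  (I : Type) (s : seq I) (P : pred I) (X : I -> set T) :
  (forall x, measurable (X x)) ->
  (mu (\big[setU/set0]_(x <- s | P x) X x) <= \sum_(x <- s | P x) mu (X x))%E.
Proof.
move=> mX; elim: s => [|y s IH]; first by rewrite !big_nil measure0.
rewrite !big_cons; case: (P y) => //.
apply: le_trans (measureU2 _ _ _) _ => //.
  by apply: bigsetU_measurable => x _.
by apply: leeD.
Qed.

Lemma eseries_geom_le (R : realType) (C q : R) : 0 <= C -> 0 < q -> q < 1 ->
  (\sum_(k <oo) (C * q ^+ k)%:E <= (C / (1 - q))%:E)%E.
Proof.
move=> C0 q0 q1; apply: lime_le.
  by apply: is_cvg_nneseries => k _; rewrite lee_fin mulr_ge0 // exprn_ge0 // ltW.
apply: nearW => N; rewrite sumEFin lee_fin.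
have := @geometric_le_lim R N C q C0 q0 ltac:(by rewrite gtr0_norm).
by [].
Qed.
Section Main.
Variables (R : realType) (d : measure_display) (Omega : measurableType d)
  (Pr : probability Omega R) (n m : nat) (adj : rel 'I_(n + m))
  (eta rho1 : R) (F : nat -> set (set Omega))
  (H : nat -> 'I_(n + m) -> Omega -> 'I_(n + m))
  (T : nat -> 'I_(n + m) -> set Omega).
Hypotheses (hsig : forall j, sigma_algebra setT (F j))
  (hFm : forall j, F j `<=` measurable)
  (hFinc : forall j, F j `<=` F j.+1)
  (hH : forall j i x, F j.+1 (H j i @^-1` [set x]))
  (hT : forall j i, F j (T j i)).

Local Notation BL := (blocklist (n + m) eta H T).

Lemma Fmono p q : (p <= q)%N -> F p `<=` F q.
Proof.
move=> /subnK <-; elim: (q - p)%N => [|k IH] //= A hA.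
by rewrite addSn; apply: hFinc; apply: IH.
Qed.

Lemma BLmeas b h x : F b [set w | x \in BL b h w].
Proof.
have -> : [set w | x \in BL b h w] = [set w | exists l, [/\ l \in iota 0 b.+1,
   [/\ (2 <= l)%N, (l <= b)%N & (b%:Z <= Num.ceil ((l%:R : R) `^ eta))%R] &
   (T l h `&` (H l.-1 h @^-1` [set x])) w]].
  rewrite predeqE => w /=; rewrite /blocklist finset.in_set asboolE; split.
    case=> l [l2 lb lc Tl Hl]; exists l; split => //.
    by rewrite in_cons mem_iota (ltnW l2) add1n ltnS lb orbT.
  by case=> l [_ [l2 lb lc] [Tl Hl]]; exists l.
have HH := (@sGex _ _ (hsig b) _ (iota 0 b.+1) (fun l => [/\ (2 <= l)%N, (l <= b)%N & (b%:Z <= Num.ceil ((l%:R : R) `^ eta))%R]) (fun l => T l h `&` (H l.-1 h @^-1` [set x]))). apply: HH => l _ [l2 lb _]; apply: (sGI (hsig b)).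
  exact: (Fmono _ _ lb _ (hT l h)).
apply: (Fmono _ _ lb); have -> : l = (l.-1).+1 by rewrite prednK // (leq_trans _ l2).
exact: hH.
Qed.

Lemma sGbool G (f : Omega -> bool) c : sigma_algebra setT G ->
  G [set w | f w] -> G [set w | f w = c].
Proof.
move=> hG hf; case: c => //.
have -> : [set w | f w = false] = ~` [set w | f w].
  by rewrite predeqE => w /=; split => [->|/negP/negbTE].
exact: (sGC hG).
Qed.

Lemma SigmaMeas b (sig : {ffun 'I_(n + m) -> {set 'I_(n + m)}}) :
  F b [set w | forall h, honest n m h -> nbhd (n + m) adj h :\: BL b h w = sig h].
Proof.
have -> : [set w | forall h, honest n m h -> nbhd (n + m) adj h :\: BL b h w = sig h]
  = [set w | forall h, h \in enum 'I_(n + m) -> honest n m h ->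
        [set w | forall x, x \in enum 'I_(n + m) -> True ->
           (x \in nbhd (n + m) adj h :\: BL b h w) = (x \in sig h)] w].
  rewrite predeqE => w; split => H1 h.
    by move=> _ hh x _ _; rewrite H1.
  move=> hh; apply/setP => x; apply: H1 => //; by rewrite mem_enum.
apply: (@sGall _ _ (hsig b) _ (enum 'I_(n + m)) (fun h => honest n m h)
  (fun h => [set w | forall x, x \in enum 'I_(n + m) -> True ->
           (x \in nbhd (n + m) adj h :\: BL b h w) = (x \in sig h)])) => h _ hh.
apply: (@sGall _ _ (hsig b) _ (enum 'I_(n + m)) (fun _ => True)
  (fun x => [set w | (x \in nbhd (n + m) adj h :\: BL b h w) = (x \in sig h)])) => x _ _.
have -> : [set w | (x \in nbhd (n + m) adj h :\: BL b h w) = (x \in sig h)] =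
  [set w | (x \notin BL b h w) && (x \in nbhd (n + m) adj h) = (x \in sig h)].
  by rewrite predeqE => w /=; rewrite finset.in_setD.
case: (x \in nbhd (n + m) adj h); last first.
  case: (x \in sig h).
    have -> : [set w | (x \notin BL b h w) && false = true] = set0.
      by rewrite predeqE => w /=; rewrite andbF.
    exact: (sG0 (hsig b)).
  have -> : [set w | (x \notin BL b h w) && false = false] = setT.
    by rewrite predeqE => w /=; rewrite andbF.
  exact: (sGT (hsig b)).
have -> : [set w | (x \notin BL b h w) && true = (x \in sig h)] =
          [set w | (x \in BL b h w) = ~~ (x \in sig h)].
  by rewrite predeqE => w /=; case: (x \in sig h); case: (x \in BL b h w).
by apply: sGbool => //; apply: BLmeas.
Qed.

Hypothesis hsamp : forall j, (1 <= j)%N ->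
     forall (A : set Omega) (s k : 'I_(n + m) -> _),
     F j A ->
     (forall w i, A w -> honest n m i ->
        nbhd (n + m) adj i :\: blocklist (n + m) eta H T j i w = s i) ->
     (Pr (A `&` [set w | forall i, honest n m i -> H j i w = k i])
      = Pr A * (\prod_(i : 'I_(n + m) | honest n m i)
                   ((k i \in s i)%:R / #|s i|%:R))%:E)%E.

Lemma step b i i' (A : set Omega) :
  (1 <= b)%N -> honest n m i' -> adj i' i -> F b A ->
  (forall w, A w -> i \notin BL b i' w) ->
  (Pr (A `&` [set w | H b i' w != i]) <=
     (1 - (dbar n m adj)%:R^-1)%:E * Pr A)%E.
Proof.
move=> b1 hi' ai FA Ai.
have inb : i \in nbhd (n + m) adj i' by rewrite /nbhd finset.in_set.
have cnb : (#|nbhd (n + m) adj i'| <= dbar n m adj)%N.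
  by rewrite /dbar (bigD1 i') //= leq_maxl.
pose S := {ffun 'I_(n + m) -> {set 'I_(n + m)}}.
pose sgs := seq.filter (fun sg : S => [forall h, ~~ honest n m h ==> (sg h == finset.set0)]) (enum S).
pose Asg (sg : S) := A `&` [set w | forall h, honest n m h ->
                          nbhd (n + m) adj h :\: BL b h w = sg h].
pose B := [set w | H b i' w != i].
have mB : measurable B.
  have -> : B = ~` (H b i' @^-1` [set i]).
    by rewrite predeqE => w /=; split => [/eqP|/eqP].
  by apply: measurableC; apply: hFm; apply: hH.
have FAsg sg : F b (Asg sg) by apply: (sGI (hsig b)) => //; apply: SigmaMeas.
have mAsg sg : measurable (Asg sg) by apply: hFm.
have dec (X : set Omega) : A `&` X = \big[setU/set0]_(sg <- sgs) (Asg sg `&` X).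
  rewrite predeqE => w; rewrite setU_big_mem; split.
  - case=> Aw Xw; exists [ffun h => if honest n m h then
        nbhd (n + m) adj h :\: BL b h w else finset.set0]; split => //.
    + rewrite mem_filter mem_enum andbT; apply/forallP => h; rewrite ffunE.
      by apply/implyP => /negbTE ->.
    + by split => //; split => // h hh; rewrite ffunE hh.
  - by case=> sg [_ _ [[Aw _] Xw]].
have hsum (X : set Omega) : measurable X ->
    Pr (A `&` X) = (\sum_(sg <- sgs) Pr (Asg sg `&` X))%E.
  move=> mX; rewrite dec mu_bigU //.
  - by rewrite filter_uniq // enum_uniq.
  - by move=> sg _; apply: measurableI.
  move=> sg sg' + + ne; rewrite !mem_filter => /andP [/forallP h1 _] /andP [/forallP h2 _].
  rewrite predeqE => w; split => // -[[[_ H1] _] [[_ H2] _]].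
  move/negP: ne; apply; apply/eqP/ffunP => h.
  case hh: (honest n m h); first by rewrite -H1 // -H2.
  by move: (h1 h) (h2 h); rewrite hh /= => /eqP -> /eqP ->.
rewrite (hsum B mB) -[A in Pr A](setIT A) (hsum setT measurableT) ge0_sume_distrr;
  last by move=> sg _; apply: measure_ge0.
apply: lee_sum => sg _; rewrite setIT.
case: (pselect (exists w, Asg sg w)) => [[w0 Aw0]|none]; last first.
  have -> : Asg sg = set0 by rewrite predeqE => w; split => // Aw; apply: none; exists w.
  by rewrite set0I measure0 mule0.
have hsg h : honest n m h -> sg h = nbhd (n + m) adj h :\: BL b h w0.
  by case: Aw0 => _ /(_ h) H1 /H1 ->.
have isg : i \in sg i' by rewrite hsg // finset.in_setD (Ai w0 Aw0.1).
have csg : (#|sg i'| <= dbar n m adj)%N.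
  by rewrite hsg //; apply: leq_trans (subset_leq_card (subsetDl _ _)) cnb.
pose Q : 'I_(n + m) -> pred 'I_(n + m) := fun h x => (h != i') || (x != i).
pose K := {ffun 'I_(n + m) -> 'I_(n + m)}.
pose ks := seq.filter (fun k : K => k \in pfamily i (honest n m) Q) (enum K).
pose Ek (k : K) := [set w | forall h, honest n m h -> H b h w = k h].
have dec2 : Asg sg `&` B = \big[setU/set0]_(k <- ks) (Asg sg `&` Ek k).
  rewrite predeqE => w; rewrite setU_big_mem; split.
  - case=> Aw Bw; exists [ffun h => if honest n m h then H b h w else i]; split => //.
    + rewrite mem_filter mem_enum andbT; apply/pfamilyP; split.
        apply/fintype.subsetP => h; rewrite inE ffunE; case: ifP => //; by rewrite eqxx.
      move=> h hh; have hh' : honest n m h := hh; rewrite ffunE hh'; change ((h != i') || (H b h w != i)); case: eqP => //= ->; exact: Bw.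
    + by split => // h hh; rewrite ffunE hh.
  - case=> k [+ _ [Aw Ew]]; rewrite mem_filter => /andP [/pfamilyP [_ hk] _].
    split => //; rewrite /B /= (Ew i' hi'); have := hk i' hi'.
    by change ((i' != i') || (k i' != i) -> k i' != i); rewrite eqxx.
have mEk k : measurable (Ek k).
  apply: (hFm b.+1).
  have -> : Ek k = [set w | forall h, h \in enum 'I_(n + m) -> honest n m h ->
                     (H b h @^-1` [set k h]) w].
    by rewrite predeqE => w; split => H1 h; [move=> _; apply: H1 | apply: H1; rewrite mem_enum].
  by apply: (@sGall _ _ (hsig b.+1) _ (enum 'I_(n + m)) (fun h => honest n m h)
    (fun h => H b h @^-1` [set k h])) => h _ _; apply: hH.
rewrite dec2 mu_bigU //; first last.
- move=> k k' + + ne; rewrite !mem_filter => /andP [/pfamilyP [s1 _] _] /andP [/pfamilyP [s2 _] _].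
  rewrite predeqE => w; split => // -[[_ E1] [_ E2]].
  move/negP: ne; apply; apply/eqP/ffunP => h.
  case hh: (honest n m h); first by rewrite -E1 // -E2.
  have nh : h \notin honest n m by rewrite /in_mem /= hh.
  have e1 : k h == i.
    by apply: contraNT nh => nk; apply: (fintype.subsetP s1); rewrite inE.
  have e2 : k' h == i.
    by apply: contraNT nh => nk; apply: (fintype.subsetP s2); rewrite inE.
  by rewrite (eqP e1) (eqP e2).
- by move=> k _; apply: measurableI.
- by rewrite filter_uniq // enum_uniq.
have hk k : Pr (Asg sg `&` Ek k) = (Pr (Asg sg) *
    (\prod_(h | honest n m h) ((k h \in sg h)%:R / #|sg h|%:R))%:E)%E.
  apply: hsamp => // w h [_ H1] hh; exact: H1.
rewrite (eq_bigr _ (fun k _ => hk k)).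
rewrite -ge0_sume_distrr; last first.
  by move=> k _; rewrite lee_fin; apply: prodr_ge0 => h _; rewrite divr_ge0.
rewrite sumEFin [in leRHS]muleC; apply: lee_wpmul2l; first exact: measure_ge0.
rewrite lee_fin big_filter enumT.
rewrite -(big_distr_big_dep _ _ _ (fun h x => (x \in sg h)%:R / #|sg h|%:R)).
exact: prod_bound.
Qed.

Lemma dbar_pos i i' : honest n m i' -> adj i' i -> (0 < dbar n m adj)%N.
Proof.
move=> hi' ai.
have inb : i \in nbhd (n + m) adj i' by rewrite /nbhd finset.in_set.
have cnb : (#|nbhd (n + m) adj i'| <= dbar n m adj)%N.
  by rewrite /dbar (bigD1 i') //= leq_maxl.
by apply: leq_trans cnb; apply/card_gt0P; exists i.
Qed.

Definition Dset i i' a t := [set w | forall l, (a <= l)%N -> (l < a + t)%N ->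
   H l i' w != i /\ i \notin BL l i' w].

Lemma Dset_F i i' a t : F (a + t) (Dset i i' a t).
Proof.
have -> : Dset i i' a t = [set w | forall l, l \in iota a t -> True ->
    ([set w | H l i' w != i] `&` [set w | i \notin BL l i' w]) w].
  rewrite predeqE => w; split => H1 l.
    by rewrite mem_iota => /andP [al lat] _; apply: H1.
  by move=> al lat; apply: H1 => //; rewrite mem_iota al.
apply: (@sGall _ _ (hsig (a + t)) _ (iota a t) (fun _ => True)
  (fun l => [set w | H l i' w != i] `&` [set w | i \notin BL l i' w])) => l.
rewrite mem_iota => /andP [al lat] _; apply: (sGI (hsig _)).
  have -> : [set w | H l i' w != i] = ~` (H l i' @^-1` [set i]).
    by rewrite predeqE => w /=; split => [/eqP|/eqP].
  apply: (sGC (hsig _)); apply: (Fmono l.+1) => //; exact: hH.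
have -> : [set w | i \notin BL l i' w] = ~` [set w | i \in BL l i' w].
  by rewrite predeqE => w /=; split => [/negP|/negP].
apply: (sGC (hsig _)); apply: (Fmono l) => //; first exact: ltnW.
exact: BLmeas.
Qed.

Lemma chain i i' a t : (1 <= a)%N -> honest n m i' -> adj i' i ->
  (Pr (Dset i i' a t) <= ((1 - (dbar n m adj)%:R^-1) ^+ t)%:E)%E.
Proof.
move=> a1 hi' ai; elim: t => [|t IH].
  have -> : Dset i i' a 0 = setT.
    by rewrite predeqE => w; split => // _ l al; rewrite addn0 ltnNge al.
  by rewrite probability_setT expr0.
have -> : Dset i i' a t.+1 = (Dset i i' a t `&` [set w | i \notin BL (a + t) i' w])
     `&` [set w | H (a + t) i' w != i].
  rewrite predeqE => w; split.
    move=> H1; have hat := H1 (a + t) (leq_addr _ _) ltac:(by rewrite addnS).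
    split; [split|].
    - by move=> l al lt; apply: H1 => //; rewrite addnS ltnW.
    - exact: hat.2.
    - exact: hat.1.
  case=> [[H1 H2] H3] l al; rewrite addnS ltnS leq_eqVlt => /orP [/eqP ->|lt].
    by [].
  exact: H1.
have FA : F (a + t) (Dset i i' a t `&` [set w | i \notin BL (a + t) i' w]).
  apply: (sGI (hsig _)); first exact: Dset_F.
  have -> : [set w | i \notin BL (a + t) i' w] = ~` [set w | i \in BL (a + t) i' w].
    by rewrite predeqE => w /=; split => [/negP|/negP].
  by apply: (sGC (hsig _)); exact: BLmeas.
apply: le_trans (step (a + t) i i' _ _ hi' ai FA _) _.
- by rewrite (leq_trans a1) // leq_addr.
- by move=> w [].
have c0 : 0 <= 1 - ((dbar n m adj)%:R : R)^-1.
  by rewrite subr_ge0 invf_le1 // ?ler1n ?ltr0n (dbar_pos i i').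
rewrite exprS EFinM; apply: lee_wpmul2l; first by rewrite lee_fin.
apply: le_trans IH; apply: measureIl.
  by apply: hFm; apply: (Dset_F i i' a t).
have -> : [set w | i \notin BL (a + t) i' w] = ~` [set w | i \in BL (a + t) i' w].
  by rewrite predeqE => w /=; split => [/negP|/negP].
by apply: measurableC; apply: hFm; exact: BLmeas.
Qed.

Lemma Xi_meas j' i i' : measurable (Xi (n + m) rho1 H j' i i').
Proof.
apply: (hFm j').
have -> : Xi (n + m) rho1 H j' i i' = [set w | forall l, l \in iota 0 j' ->
    (Num.floor (theta rho1 j') <= l%:Z)%R /\ (l + 2 <= j')%N -> [set w | H l i' w != i] w].
  rewrite predeqE => w; split => H1 l.
    by move=> _ [fl lj]; apply: H1.
  move=> fl lj; apply: H1 => //; rewrite mem_iota /=; lia.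
apply: (@sGall _ _ (hsig j') _ (iota 0 j') (fun l => (Num.floor (theta rho1 j') <= l%:Z)%R /\ (l + 2 <= j')%N)
  (fun l => [set w | H l i' w != i])) => l _ [_ lj].
have -> : [set w | H l i' w != i] = ~` (H l i' @^-1` [set i]).
  by rewrite predeqE => w /=; split => [/eqP|/eqP].
apply: (sGC (hsig _)); apply: (Fmono l.+1); first lia.
exact: hH.
Qed.

Lemma Xi_bound i i' j' : honest n m i' -> adj i' i -> 1 < eta ->
  J2cond eta rho1 j' ->
  (Pr (Xi (n + m) rho1 H j' i i') <=
     (expR (- (j'%:R / (3 * (dbar n m adj)%:R))))%:E)%E.
Proof.
move=> hi' ai eta1.
rewrite /J2cond; set f := Num.floor (theta rho1 j').
set K := Num.ceil ((f%:~R : R) `^ eta) => -[f1 [f2 f3]].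
have fK : (f <= K)%R.
  have h1 : (1 : R) <= f%:~R by rewrite ler1z.
  have : (f%:~R : R) <= K%:~R.
    apply: le_trans (ceil_ge _); rewrite -{1}(powRr1 (le_trans ler01 h1)).
    by apply: ler_powR => //; apply: ltW.
  by rewrite ler_int.
have K0 : (0 <= K)%R by apply: le_trans fK; apply: le_trans f1.
set kk := `|K|%N.
have Kk : K = kk%:Z by rewrite /kk gez0_abs.
have f3' : (j'%:R / 3 : R) <= j'%:R - 2 - kk%:R by rewrite Kk in f3.
have kj : (kk + 2 <= j')%N.
  have : (0 : R) <= j'%:R / 3 by rewrite divr_ge0.
  move=> h; have : (kk + 2)%:R <= (j'%:R : R) by rewrite natrD; lra.
  by rewrite ler_nat.
set a := kk.+1; set t := (j' - 2 - kk)%N.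
have sub : Xi (n + m) rho1 H j' i i' `<=` Dset i i' a t.
  move=> w Xw l al lat.
  have lj : (l + 2 <= j')%N by rewrite /a /t in al lat; lia.
  have fl : (f <= l%:Z)%R.
    apply: le_trans fK _; rewrite Kk lez_nat; rewrite /a in al; lia.
  split; first exact: Xw.
  apply/negP; rewrite /blocklist finset.in_set asboolE => -[l0 [l02 l0l lc Tl Hl]].
  case: (boolP (f <= (l0.-1)%:Z)%R) => fl0.
    have := Xw l0.-1 fl0 ltac:(lia); by rewrite Hl eqxx.
  have l0f : ((l0%:R : R) <= f%:~R).
    have : (l0%:Z <= f)%R by move: fl0 l02; lia.
    by move=> h; have : ((l0%:Z)%:~R : R) <= f%:~R by rewrite ler_int.
  have : (Num.ceil ((l0%:R : R) `^ eta) <= K)%R.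
    apply: le_ceil; apply: ge0_ler_powR => //.
    - by apply: ltW; apply: lt_trans eta1.
    - by rewrite nnegrE.
    - by rewrite nnegrE (le_trans _ l0f).
  move=> h; have := le_trans lc h; rewrite Kk lez_nat; rewrite /a in al; lia.
apply: le_trans (le_measure _ _ _ sub) _.
- by rewrite inE; apply: Xi_meas.
- by rewrite inE; apply: hFm; apply: Dset_F.
apply: le_trans (chain i i' a t _ hi' ai) _ => //.
have dp := dbar_pos i i' hi' ai.
set D := ((dbar n m adj)%:R : R).
have D1 : 1 <= D by rewrite /D ler1n.
have c0 : 0 <= 1 - D^-1 by rewrite subr_ge0 invf_le1 // (lt_le_trans ltr01).
rewrite lee_fin.
apply: le_trans (_ : expR (- D^-1) ^+ t <= _).
  apply: lerXn2r => //; first by rewrite nnegrE expR_ge0.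
  exact: expR_ge1Dx.
rewrite -expRM_natl ler_expR.
have tR : (t%:R : R) = j'%:R - 2 - kk%:R.
  rewrite /t natrB; last by lia.
  by rewrite natrB ?natrD //; lia.
have Dp : 0 < D by apply: lt_le_trans D1.
rewrite tR mulrN lerN2 invfM mulrA -mulrA [3^-1 * _]mulrC mulrA.
rewrite mulrAC; apply: ler_wpM2r; [by rewrite invr_ge0 ltW | exact: f3'].
Qed.

Lemma final j J2 : simple_graph (n + m) adj -> 1 < eta ->
  is_J2star eta rho1 J2 -> (J2 <= j)%N ->
  (Pr (tau_com_gt n m rho1 adj H j)
   <= (3 * (n + m)%:R ^+ 3 * expR (- (j%:R / (3 * (dbar n m adj)%:R))))%:E)%E.
Proof.
move=> [sym irr] eta1 [J2c _] J2j.
set N := (n + m)%N.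
set D := dbar n m adj.
pose Bk k := \big[setU/set0]_(p : 'I_N * 'I_N | hon_edge n m adj p.1 p.2)
    Xi N rho1 H (j + k) p.1 p.2.
have tauE : tau_com_gt n m rho1 adj H j = \bigcup_k Bk k.
  rewrite predeqE => w; split.
    move=> Hw; apply: contrapT => nB; apply: (Hw j (leqnn j)) => j' jj' i i' he Xw.
    apply: nB; exists (j' - j)%N => //; apply/setU_big_mem; exists (i, i'); split => //.
    by rewrite subnKC.
  case=> k _ /setU_big_mem [[i i'] [_ he Xw]] k0 k0j Hc.
  by apply: (Hc (j + k)%N _ i i' he Xw); rewrite (leq_trans k0j) // leq_addr.
have mBk k : measurable (Bk k).
  by apply: bigsetU_measurable => p _; apply: Xi_meas.
have RHS0 : (0 <= 3 * N%:R ^+ 3 * expR (- (j%:R / (3 * D%:R))) :> R).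
  by rewrite mulr_ge0 ?expR_ge0 // mulr_ge0 // exprn_ge0.
case: (posnP D) => [D0|Dp].
  have -> : tau_com_gt n m rho1 adj H j = set0.
    rewrite tauE predeqE => w; split => //; case=> k _ /setU_big_mem [[i i'] [_ he _]].
    move: he; rewrite /hon_edge /= => /and3P [hi _ ai].
    by have := dbar_pos i' i hi ai; rewrite -/D D0.
  by rewrite measure0 lee_fin.
set x := (3 * D%:R : R)^-1.
set E := expR (- (j%:R / (3 * D%:R))) : R.
set q := expR (- x).
have Bk_le k : (Pr (Bk k) <= ((N%:R ^+ 2 * E) * q ^+ k)%:E)%E.
  apply: le_trans (@mu_bigU_le _ _ _ Pr _ _ _ _ (fun p => Xi_meas (j + k) p.1 p.2)) _.
  apply: le_trans (_ : _ <= \sum_(p : 'I_N * 'I_N | hon_edge n m adj p.1 p.2)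
      (expR (- ((j + k)%:R / (3 * D%:R))))%:E)%E _.
    apply: lee_sum => -[i i'] /and3P [hi hi' ai] /=.
    apply: Xi_bound => //; first by rewrite (sym i' i).
    by apply: J2c; rewrite (leq_trans J2j) // leq_addr.
  rewrite sumEFin lee_fin.
  have -> : expR (- ((j + k)%:R / (3 * D%:R))) = E * q ^+ k :> R.
    by rewrite -expRM_natl -expRD /E /x natrD; congr expR; field;
       rewrite pnatr_eq0 -lt0n Dp.
  apply: le_trans (_ : \sum_(p : 'I_N * 'I_N) E * q ^+ k <= _).
    rewrite [leRHS](bigID (fun p : 'I_N * 'I_N => hon_edge n m adj p.1 p.2)) /= lerDl.
    by apply: sumr_ge0 => p _; rewrite mulr_ge0 ?expR_ge0 // exprn_ge0 // expR_ge0.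
  by rewrite sumr_const card_prod card_ord -[in leLHS]mulr_natl natrM -expr2 mulrA.
have DN : (D <= N.-1)%N.
  apply/bigmax_leqP => i _; rewrite -(card_ord N) -(cardsC1 i).
  apply: subset_leq_card; apply/fintype.subsetP => k0.
  rewrite /nbhd finset.in_set => aik; rewrite !inE; apply: contraTneq aik => <-.
  by rewrite irr.
have Np : (0 < N)%N by move: DN Dp; lia.
rewrite tauE.
have := le_mu_bigcup Pr mBk (bigcup_measurable (fun k _ => mBk k)).
move/le_trans; apply.
apply: le_trans (lee_nneseries _ (fun k _ => Bk_le k)) _.
  by move=> k _ _; apply: measure_ge0.
have xp : 0 < x by rewrite /x invr_gt0 mulr_gt0 // ltr0n.
have q0 : 0 < q by rewrite /q expR_gt0.
have q1 : q < 1 by rewrite /q expR_lt1 oppr_lt0.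
have E0 : 0 <= E by rewrite /E expR_ge0.
have C0 : 0 <= N%:R ^+ 2 * E by rewrite mulr_ge0 // exprn_ge0.
have := @eseries_geom_le _ _ _ C0 q0 q1; move/le_trans; apply.
rewrite lee_fin.
have qle : q <= (1 + x)^-1.
  rewrite /q expRN lef_pV2 ?posrE ?expR_gt0 //; first exact: expR_ge1Dx.
  by rewrite addr_gt0.
set y := (3 * D%:R : R).
have yp : 0 < y by rewrite /y mulr_gt0 // ltr0n.
have xy : x = y^-1 by [].
have h1 : (y + 1)^-1 <= 1 - q.
  have : (1 + x)^-1 = y / (y + 1).
    by rewrite xy; field; apply/andP; split; rewrite lt0r_neq0 // addr_gt0.
  move=> e; rewrite e in qle.
  have : 1 - y / (y + 1) = (y + 1)^-1.
    by field; rewrite lt0r_neq0 // addr_gt0.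
  lra.
have h2 : (1 - q)^-1 <= y + 1.
  have hq : 0 < 1 - q by lra.
  rewrite -[leRHS]invrK lef_pV2 //; rewrite posrE ?invr_gt0 //; lra.
have yN : y + 1 <= 3 * N%:R.
  have : (D%:R : R) <= N%:R - 1.
    by rewrite -(@natrB R N 1) // ler_nat; move: DN Np; lia.
  rewrite /y; lra.
apply: le_trans (_ : N%:R ^+ 2 * E * (3 * N%:R) <= _); last first.
  by rewrite le_eqVlt; apply/orP; left; apply/eqP; ring.
apply: ler_wpM2l; first by rewrite mulr_ge0 // exprn_ge0.
exact: le_trans h2 yN.
Qed.
End Main.

Theorem mainTheorem8
  (R : realType) (d : measure_display) (Omega : measurableType d)
  (Pr : probability Omega R)
  (n m : nat) (adj : rel 'I_(n + m))
  (alpha beta eta rho1 rho2 : R)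
  (F : nat -> set (set Omega))
  (H : nat -> 'I_(n + m) -> Omega -> 'I_(n + m))
  (T : nat -> 'I_(n + m) -> set Omega) :
  simple_graph (n + m) adj ->
  G_hon_connected n m adj ->
  1 < beta ->
  3 / 2 + 1 / (2 * beta) + 1 / (2 * rho1 ^+ 2) < alpha ->
  1 / (2 * alpha - 3) < rho2 -> rho2 < rho1 * (beta - 1) ->
  1 < eta -> 0 < rho1 -> rho1 <= 1 / eta ->
  (forall j, sigma_algebra setT (F j)) ->
  (forall j, F j `<=` measurable) ->
  (forall j, F j `<=` F j.+1) ->
  (forall j i x, F j.+1 (H j i @^-1` [set x])) ->
  (forall j i, F j (T j i)) ->
  (forall j, (1 <= j)%N ->
     forall (A : set Omega) (s k : 'I_(n + m) -> _),
     F j A ->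
     (forall w i, A w -> honest n m i ->
        nbhd (n + m) adj i :\: blocklist (n + m) eta H T j i w = s i) ->
     (Pr (A `&` [set w | forall i, honest n m i -> H j i w = k i])
      = Pr A * (\prod_(i : 'I_(n + m) | honest n m i)
                   ((k i \in s i)%:R / #|s i|%:R))%:E)%E) ->
  forall j J2 : nat, is_J2star eta rho1 J2 -> (J2 <= j)%N ->
  (Pr (tau_com_gt n m rho1 adj H j)
   <= (3 * (n + m)%:R ^+ 3 * expR (- (j%:R / (3 * (dbar n m adj)%:R))))%:E)%E.
Proof.
move=> sg _ _ _ _ _ eta1 _ _ hsig hFm hFinc hH hT hsamp j J2 hJ hj.
exact: (final _ _ _ _ _ _ _ _ _ _ _ _ hsig hFm hFinc hH hT hsamp j J2 sg eta1 hJ hj).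
Qed.
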